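(* Let $r\ge3$, $n>r$. For $1\le i<r$ let $\tau'(T_{s_i}):V_\omega\to V_\omega$ be the action of $vF_iE_i-1$, let $\tau'(T_{\rho^{-1}})$ be the action of $(F_nF_{n-1}\cdots F_{r+1})(F_1F_2\cdots F_r)$, and let $\tau'(T_\rho)$ be the action of $(E_rE_{r+1}\cdots E_{n-1})(E_{r-1}E_{r-2}\cdots E_1)E_n$, all restricted to $V_\omega$. Then $\tau'(T_\rho)$ and $\tau'(T_{\rho^{-1}})$ are mutually inverse, and, writing $q=v^2$: (1') $\tau'(T_{s_i})^2=(q-1)\tau'(T_{s_i})+q$ for $1\le i\le r-1$; (2') $\tau'(T_{s_i})\tau'(T_{s_j})=\tau'(T_{s_j})\tau'(T_{s_i})$ if $|i-j|>1$; (3') $\tau'(T_{s_i})\tau'(T_{s_j})\tau'(T_{s_i})=\tau'(T_{s_j})\tau'(T_{s_i})\tau'(T_{s_j})$ if $|i-j|=1$; (4') $\tau'(T_\rho)\tau'(T_{s_{i+1}})\tau'(T_\rho)^{-1}=\tau'(T_{s_i})$ for $1\le i<r-1$; (5') $\tau'(T_\rho)^r\tau'(T_{s_i})\tau'(T_\rho)^{-r}=\tau'(T_{s_i})$ for $1\le i\le r-1$.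
   Context: $V$ is the $\mathbb{Q}(v)$-space with basis $e_t$ ($t\in\mathbb{Z}$), with $E_ie_{t+1}=e_t$ if $i\equiv t\pmod n$ (else $0$), $F_ie_t=e_{t+1}$ if $i\equiv t\pmod n$ (else $0$), $K_ie_t=ve_t$ if $i\equiv t \pmod n$ (else $e_t$), $1\le i\le n$; these act on $V^{\otimes r}$ via iterated $\Delta(E_i)=E_i\otimes K_iK_{i+1}^{-1}+1\otimes E_i$, $\Delta(F_i)=K_i^{-1}K_{i+1}\otimes F_i+F_i\otimes1$, $\Delta(K_i^{\pm1})=K_i^{\pm1}\otimes K_i^{\pm1}$ (indices mod $n$). A basis tensor $e_{t_1}\otimes\cdots\otimes e_{t_r}$ has weight $\lambda$ with $\lambda_i=|\{j:t_j\equiv i\pmod n\}|$; $V_\omega$ is the span of basis tensors of weight $\omega=(1^r,0^{n-r})$. *)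

(* Defs.v *)
From HB Require Import structures.
From mathcomp Require Import all_boot all_order all_algebra.
From mathcomp Require Import fraction.
Unset Printing Implicit Defensive.
Import Order.TTheory GRing.Theory Num.Theory.
Local Open Scope ring_scope.

Definition Qv : fieldType := {fraction {poly rat}}.
Definition vv : Qv := tofrac ('X : {poly rat}).

(* Basis tensors e_{t_1} (x) ... (x) e_{t_r} of V^{(x) r} are indexed by
   t : {ffun 'I_r -> int}.  A vector of V^{(x) r} is a finitely supported
   coefficient function; we work in the ambient space of all coefficient
   functions and restrict to finitely supported ones (see [inVomega]). *)
Definition idx (r : nat) := {ffun 'I_r -> int}.
Definition vec (r : nat) := idx r -> Qv.

Definition upd r (t : idx r) (j : 'I_r) (d : int) : idx r :=
  [ffun k => if k == j then t k + d else t k].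

Definition cgr (n : nat) (a b : int) : bool := (a == b %[mod (n%:Z)])%Z.

(* exponent of v for K_i K_{i+1}^{-1} acting on e_t (indices mod n) *)
Definition kexp (n i : nat) (t : int) : int :=
  (cgr n t i%:Z)%:Z - (cgr n t (i.+1)%:Z)%:Z.

(* Action of E_i on V^{(x) r}, via the iterated coproduct
   Delta(E_i) = E_i (x) K_i K_{i+1}^{-1} + 1 (x) E_i, i.e.
   sum_j 1 (x)..(x) 1 (x) E_i [pos j] (x) K_iK_{i+1}^{-1} (x)..(x) K_iK_{i+1}^{-1}.
   On V: E_i e_{t+1} = e_t if i = t mod n, else 0.
   Written as the (row-finite) matrix action on coefficient functions:
   coefficient of e_s in E_i x. *)
Definition Eop (n r i : nat) (x : vec r) : vec r := fun s =>
  \sum_(j < r)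
    (if cgr n (s j) i%:Z then
       (\prod_(k < r | (j < k)%N) vv ^ (kexp n i (s k))) * x (upd r s j 1)
     else 0).

(* Action of F_i, via Delta(F_i) = K_i^{-1}K_{i+1} (x) F_i + F_i (x) 1, i.e.
   sum_j K_i^{-1}K_{i+1} (x)..(x) K_i^{-1}K_{i+1} (x) F_i [pos j] (x) 1 (x)..(x) 1.
   On V: F_i e_t = e_{t+1} if i = t mod n, else 0. *)
Definition Fop (n r i : nat) (x : vec r) : vec r := fun s =>
  \sum_(j < r)
    (if cgr n (s j - 1) i%:Z then
       (\prod_(k < r | (k < j)%N) vv ^ (- kexp n i (s k))) * x (upd r s j (-1))
     else 0).

Definition wt (n r : nat) (t : idx r) (i : nat) : nat :=
  #|[set j : 'I_r | cgr n (t j) i%:Z]|.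

Definition is_omega (n r : nat) (t : idx r) : bool :=
  [forall i : 'I_n, (wt n r t i.+1 == (if (i.+1 <= r)%N then 1%N else 0%N))%N].

Definition inVomega (n r : nat) (x : vec r) : Prop :=
  (exists supp : seq (idx r), forall t, x t != 0 -> t \in supp) /\
  (forall t, x t != 0 -> is_omega n r t).

(* product X_{a_1} X_{a_2} ... X_{a_m} of operators (rightmost applied first) *)
Definition prodop r (X : nat -> vec r -> vec r) (l : seq nat) (x : vec r) : vec r :=
  foldr (fun i y => X i y) x l.

Definition Ts (n r i : nat) (x : vec r) : vec r :=
  fun s => vv * Fop n r i (Eop n r i x) s - x s.

Definition Trhoinv (n r : nat) (x : vec r) : vec r :=
  prodop r (Fop n r) ([seq (n - k)%N | k <- iota 0 (n - r)] ++ iota 1 r) x.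

Definition Trho (n r : nat) (x : vec r) : vec r :=
  prodop r (Eop n r) (iota r (n - r) ++ rev (iota 1 r.-1) ++ [:: n]) x.

(* Main.v *)
Require Import Defs.
From HB Require Import structures.
From mathcomp Require Import all_boot all_order all_algebra.
From mathcomp Require Import fraction.
From mathcomp Require Import zify ring lra.
From Stdlib Require Import FunctionalExtensionality.
Import Order.TTheory GRing.Theory Num.Theory.
Local Open Scope ring_scope.

Lemma alg1 (R : fieldType) (v x1 xs : R) : v != 0 ->
  v * (v^-1 * (v * x1 + 1 * xs)) - xs = v * x1 + 0 * xs.
Proof. move=> h. field. exact: h. Qed.
Lemma alg2 (R : comRingType) (v x1 xs : R) :
  v * (1 * (1 * x1 + v * xs)) - xs = v * x1 + (v ^+ 2 - 1) * xs.
Proof. ring. Qed.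

Section Main.
Variables (n r : nat).
Hypothesis hr : (3 <= r)%N.
Hypothesis hn : (r < n)%N.

Definition res (a : int) : int := (a %% n%:Z)%Z.

Lemma cgrE a b : cgr n a b = (res a == res b). Proof. by []. Qed.
Lemma res_ge0 a : 0 <= res a. Proof. apply: modz_ge0. apply/eqP; lia. Qed.
Lemma res_lt a : res a < n%:Z. Proof. apply: ltz_pmod. lia. Qed.
Lemma resE a k : 0 <= a - k * n%:Z < n%:Z -> res a = a - k * n%:Z.
Proof.
move=> h. rewrite /res -(modz_small h) -(modzMDl k (a - k * n%:Z)).
by rewrite addrC subrK.
Qed.
Lemma resD a b : res (res a + b) = res (a + b). Proof. by rewrite /res modzDml. Qed.
Lemma res_id a : 0 <= a < n%:Z -> res a = a.
Proof. by move=> h; rewrite (resE _ 0) ?mul0r ?subr0. Qed.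
Lemma res_sub a : n%:Z <= a < n%:Z + n%:Z -> res a = a - n%:Z.
Proof. move=> h; rewrite (resE _ 1) ?mul1r //; lia. Qed.
Lemma res_add a : - n%:Z <= a < 0 -> res a = a + n%:Z.
Proof. move=> h; rewrite (resE _ (-1)) ?mulN1r ?opprK //; lia. Qed.
Lemma res_nat (a : int) : exists m : nat, a = m%:Z -> True. Proof. by exists 0%N. Qed.

Lemma res_natE (a : int) : exists m : nat, res a = m%:Z.
Proof. exists `|res a|%N. by rewrite gez0_abs // res_ge0. Qed.

Definition om (s : idx r) := is_omega n r s.

Lemma wtE (t : idx r) (m : nat) : wt n r t m = #|[set j | res (t j) == res m%:Z]|.
Proof. by []. Qed.

Lemma om_wt s : om s -> forall m, (1 <= m <= n)%N ->
  wt n r s m = (if (m <= r)%N then 1 else 0)%N.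
Proof.
move=> /forallP h m /andP[m1 mn]. have mo : (m.-1 < n)%N by lia.
have := h (Ordinal mo) => /= /eqP. by rewrite prednK.
Qed.

Lemma omP s : om s <->
  [/\ (forall k, 1 <= res (s k) <= r%:Z),
      (forall k l, res (s k) = res (s l) -> k = l) &
      (forall c, 1 <= c <= r%:Z -> exists k, res (s k) = c)].
Proof.
split.
- move=> H. have W := @om_wt s H.
  have A : forall k (m : nat), (1 <= m <= n)%N -> res (s k) = res m%:Z -> (m <= r)%N.
    move=> k m hm e. have : (0 < wt n r s m)%N.
      rewrite wtE; apply/card_gt0P; exists k; by rewrite inE e.
    by rewrite W //; case: (m <= r)%N.
  have Ra : forall k, 1 <= res (s k) <= r%:Z.
    move=> k. have [m em] := res_natE (s k).
    have lm := res_lt (s k).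
    case: (m =P 0%N) => m0.
    + have := A k n. rewrite em m0 /res modzz. move=> /(_ _ erefl). lia.
    + have := A k m. rewrite em res_id; last by lia.
      move=> /(_ _ erefl). lia.
  split => //.
  + move=> k l e. have [m em] := res_natE (s k). have := Ra k. rewrite em => hm.
    have : wt n r s m == 1%N by rewrite W; [ rewrite ifT //; lia | lia].
    rewrite wtE => /cards1P [x hx].
    have : k \in [set j | res (s j) == res m%:Z] by rewrite inE em res_id //; lia.
    have : l \in [set j | res (s j) == res m%:Z] by rewrite inE -e em res_id //; lia.
    by rewrite hx !inE => /eqP -> /eqP ->.
  + move=> c hc. have [m em] : exists m : nat, c = m%:Z.
      exists `|c|%N; rewrite gez0_abs //; lia.
    subst c. have : (0 < wt n r s m)%N by rewrite W; [ rewrite ifT //; lia | lia].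
    rewrite wtE => /card_gt0P [k]; rewrite inE => /eqP e; exists k.
    by rewrite e res_id //; lia.
- case=> Ra Rb Rc. apply/forallP => i. rewrite wtE. have io := ltn_ord i.
  case: (leqP i.+1 r) => h.
  + have [k ek] := Rc i.+1%:Z ltac:(lia).
    apply/cards1P; exists k; apply/setP => j; rewrite !inE.
    rewrite (res_id (i.+1)%:Z); last by lia.
    apply/eqP/eqP => [e|->//]. apply: Rb. by rewrite e ek.
  + rewrite cards_eq0; apply/eqP/setP => j; rewrite !inE.
    apply/negbTE/eqP => e. have := Ra j. rewrite e.
    case: (i.+1 =P n) => ein.
    * rewrite ein /res modzz. lia.
    * rewrite res_id; lia.
Qed.

Definition tr (d : int -> int) (s : idx r) : idx r := [ffun k => s k + d (res (s k))].

Lemma res_tr d s k : res (tr d s k) = res (res (s k) + d (res (s k))).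
Proof. by rewrite ffunE resD. Qed.

Lemma tr_comp d1 d2 s : tr d2 (tr d1 s) = tr (fun c => d1 c + d2 (res (c + d1 c))) s.
Proof. apply/ffunP => k; rewrite !ffunE resD addrA. done. Qed.

Lemma tr_ext d1 d2 s : om s -> (forall c, 1 <= c <= r%:Z -> d1 c = d2 c) -> tr d1 s = tr d2 s.
Proof.
move=> /omP [Ra _ _] E. apply/ffunP => k; rewrite !ffunE. by rewrite E // Ra.
Qed.

Lemma tr0 s : tr (fun _ => 0) s = s.
Proof. by apply/ffunP => k; rewrite !ffunE addr0. Qed.

Lemma om_tr d s : om s ->
  (forall c, 1 <= c <= r%:Z -> 1 <= res (c + d c) <= r%:Z) ->
  (forall c c', 1 <= c <= r%:Z -> 1 <= c' <= r%:Z -> res (c + d c) = res (c' + d c') -> c = c') ->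
  (forall c, 1 <= c <= r%:Z -> exists2 c', 1 <= c' <= r%:Z & res (c' + d c') = c) ->
  om (tr d s).
Proof.
move=> /omP [Ra Rb Rc] H1 H2 H3. apply/omP; split.
- move=> k; rewrite res_tr; apply: H1; apply: Ra.
- move=> k l; rewrite !res_tr => e; apply: Rb; exact: H2 (Ra k) (Ra l) e.
- move=> c hc; have [c' h1 h2] := H3 c hc; have [k ek] := Rc c' h1.
  by exists k; rewrite res_tr ek.
Qed.

Definition wv (t : idx r) (c : int) : nat := #|[set j | res (t j) == c]|.

Lemma wv_upd t j d c :
  (wv (upd r t j d) c + (res (t j) == c) = wv t c + (res (t j + d) == c))%N.
Proof.
rewrite /wv (cardsD1 j [set j0 | res (upd r t j d j0) == c])
  (cardsD1 j [set j0 | res (t j0) == c]) !inE ffunE eqxx.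
have -> : [set j0 | res (upd r t j d j0) == c] :\ j = [set j0 | res (t j0) == c] :\ j.
  by apply/setP => k; rewrite !inE ffunE; case: eqP.
lia.
Qed.

Lemma res_shift a b d : (res (a + d) == res (b + d)) = (res a == res b).
Proof.
apply/eqP/eqP => e.
- rewrite -(addrK d a) -(addrK d b) -resD e resD. done.
- by rewrite -resD e resD.
Qed.

Lemma E_supp i x s : Eop n r i x s != 0 ->
  exists j, res (s j) = res i%:Z /\ x (upd r s j 1) != 0.
Proof.
move=> H.
case: (pickP (fun j => (res (s j) == res i%:Z) && (x (upd r s j 1) != 0))) =>
  [j /andP[/eqP e h] | N]; first by exists j.
exfalso; move/eqP: H; apply; rewrite /Eop big1 // => j _. rewrite cgrE.
case: eqP => e //=. have := N j. rewrite e eqxx /= => /negbFE /eqP ->.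
by rewrite mulr0.
Qed.

Lemma F_supp i x s : Fop n r i x s != 0 ->
  exists j, res (s j) = res i.+1%:Z /\ x (upd r s j (-1)) != 0.
Proof.
move=> H.
case: (pickP (fun j => (res (s j) == res i.+1%:Z) && (x (upd r s j (-1)) != 0))) =>
  [j /andP[/eqP e h] | N]; first by exists j.
exfalso; move/eqP: H; apply; rewrite /Fop big1 // => j _. rewrite cgrE.
have -> : res (s j - 1) == res i%:Z = (res (s j) == res i.+1%:Z).
  by rewrite -(res_shift _ _ 1) subrK -addn1 PoszD.
case: eqP => e //=. have := N j. rewrite e eqxx /= => /negbFE /eqP ->.
by rewrite mulr0.
Qed.

Lemma prodE_supp l x s : prodop r (Eop n r) l x s != 0 ->
  exists s', x s' != 0 /\ forall c,
   (wv s c + \sum_(i <- l) (res i.+1%:Z == c) = wv s' c + \sum_(i <- l) (res i%:Z == c))%N.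
Proof.
elim: l s => [|i l IH] s /=.
- move=> h; exists s; split => // c; by rewrite !big_nil.
- move=> /E_supp [j [ej /IH [s' [hs' W]]]]. exists s'; split => // c.
  rewrite !big_cons. have := W c. have := wv_upd s j 1 c.
  have -> : res (s j + 1) = res i.+1%:Z by rewrite -resD ej resD -addn1 PoszD.
  rewrite ej. lia.
Qed.

Lemma prodF_supp l x s : prodop r (Fop n r) l x s != 0 ->
  exists s', x s' != 0 /\ forall c,
   (wv s c + \sum_(i <- l) (res i%:Z == c) = wv s' c + \sum_(i <- l) (res i.+1%:Z == c))%N.
Proof.
elim: l s => [|i l IH] s /=.
- move=> h; exists s; split => // c; by rewrite !big_nil.
- move=> /F_supp [j [ej /IH [s' [hs' W]]]]. exists s'; split => // c.
  rewrite !big_cons. have := W c. have := wv_upd s j (-1) c.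
  have -> : res (s j + -1) = res i%:Z.
    by rewrite -resD ej resD -addn1 PoszD addrK.
  rewrite ej. lia.
Qed.

Lemma wv_om s s' : (forall c, wv s c = wv s' c) -> om s = om s'.
Proof.
move=> H. rewrite /om /is_omega; apply: eq_forallb => i.
have E t m : wt n r t m = wv t (res m%:Z) by [].
by rewrite !E H.
Qed.

Lemma sum_shift l : perm_eq l (iota 1 n) -> forall c,
  (\sum_(i <- l) (res i.+1%:Z == c) = \sum_(i <- l) (res i%:Z == c))%N.
Proof.
move=> P c; rewrite !(perm_big _ P) /=.
have [n' En] : exists n', n = n'.+1 by exists n.-1; lia.
have e2 : (\sum_(i <- iota 1 n) (res i.+1%:Z == c) = \sum_(i <- iota 2 n) (res i%:Z == c))%N.
  by rewrite -[2%N]/(1 + 1)%N iotaDl big_map.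
have e3 : iota 2 n'.+1 = iota 2 n' ++ [:: n'.+2].
  have := iotaD 2 n' 1; rewrite addn1 => ->. by rewrite /= add2n.
rewrite e2 En e3 big_cat /= !big_cons big_nil.
have -> : res n'.+2%:Z = res 1%:Z.
  rewrite res_sub; last by lia. rewrite res_id; lia.
lia.
Qed.

Definition LR := iota r (n - r) ++ rev (iota 1 r.-1) ++ [:: n].
Definition LL := [seq (n - k)%N | k <- iota 0 (n - r)] ++ iota 1 r.

Lemma LR_perm : perm_eq LR (iota 1 n).
Proof.
have -> : iota 1 n = iota 1 r.-1 ++ iota r (n - r) ++ [:: n].
  have E : (r.-1 + (n - r) + 1 = n)%N by lia.
  rewrite -{1}E !iotaD -catA; congr (_ ++ (iota _ _ ++ [:: _])); lia.
rewrite /LR perm_catCA catA [X in perm_eq _ X]catA perm_cat2r perm_cat2r.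
by rewrite perm_rev.
Qed.

Lemma map_sub_iota m : (m <= n)%N ->
  [seq (n - k)%N | k <- iota 0 m] = rev (iota (n - m).+1 m).
Proof.
elim: m => [|m IH] hm; first by [].
have -> : iota 0 m.+1 = iota 0 m ++ [:: m] by rewrite -addn1 iotaD.
rewrite map_cat IH; last by lia.
have -> : (n - m.+1).+1 = (n - m)%N by lia.
by rewrite [iota (n - m) m.+1]/= rev_cons -cats1.
Qed.

Lemma LL_perm : perm_eq LL (iota 1 n).
Proof.
have -> : iota 1 n = iota 1 r ++ iota r.+1 (n - r).
  have E : (r + (n - r) = n)%N by lia.
  by rewrite -{1}E !iotaD add1n.
rewrite /LL map_sub_iota; last by lia.
have -> : (n - (n - r)).+1 = r.+1 by lia.
by rewrite perm_catC perm_cat2l perm_rev.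
Qed.

Definition Om (x : vec r) := forall t, x t != 0 -> om t.

Lemma Om_Trho x : Om x -> Om (Trho n r x).
Proof.
move=> H s; rewrite /Trho -/LR => /prodE_supp [s' [h W]].
rewrite (@wv_om s s') ?H // => c. have := W c. rewrite sum_shift //; last exact: LR_perm.
by move/eqP; rewrite eqn_add2r => /eqP.
Qed.

Lemma Om_Trhoinv x : Om x -> Om (Trhoinv n r x).
Proof.
move=> H s; rewrite /Trhoinv -/LL => /prodF_supp [s' [h W]].
rewrite (@wv_om s s') ?H // => c. have := W c. rewrite sum_shift //; last exact: LL_perm.
by move/eqP; rewrite eqn_add2r => /eqP.
Qed.

Lemma Om_Ts i x : Om x -> Om (Ts n r i x).
Proof.
move=> H s. rewrite /Ts. case: (eqVneq (x s) 0) => [-> | /H //].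
rewrite subr0. case: (eqVneq (Fop n r i (Eop n r i x) s) 0) => [->|]; first by rewrite mulr0 eqxx.
move=> h _.
have := @prodF_supp [:: i] (Eop n r i x) s h => -[s1 [h1 W1]].
have := @prodE_supp [:: i] x s1 h1 => -[s2 [h2 W2]].
rewrite (@wv_om s s2) ?H // => c. have := W1 c. have := W2 c.
rewrite !big_cons !big_nil. lia.
Qed.

Lemma res_eqk a b : res a = res b -> exists k, a - b = k * n%:Z.
Proof.
move=> e. exists ((a %/ n%:Z)%Z - (b %/ n%:Z)%Z).
rewrite {1}(divz_eq a n%:Z) {1}(divz_eq b n%:Z) -/(res a) -/(res b) e. ring.
Qed.

Lemma res_neq a b : (0 < a - b < n%:Z) \/ (0 < b - a < n%:Z) -> res a != res b.
Proof.
move=> h; apply/eqP => /res_eqk [k hk]. have hn0 : (0 < n%:Z) by lia. case: h => h; [case: (lerP k 0) => hk0 | case: (lerP 0 k) => hk0]; nia.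
Qed.

Lemma res_eq0 a b : a = b -> res a = res b. Proof. by move=> ->. Qed.
Lemma res_eqP a b : a = b + n%:Z -> res a = res b.
Proof. move=> ->. by rewrite /res modzDr. Qed.
Lemma res_eqN a b : a = b - n%:Z -> res a = res b.
Proof. move=> ->. by rewrite /res -(modzDr (b - n%:Z)) subrK. Qed.

Ltac split_if := match goal with |- context [if ?b then _ else _] =>
  let h := fresh "hb" in case: (boolP b) => h end.
Ltac res_fin := first [ apply: res_eq0; lia | apply: res_eqP; lia | apply: res_eqN; lia
                      | apply: res_neq; lia ].
Ltac crunch := repeat split_if; rewrite /=; repeat split; res_fin.

Lemma cgrm1 a i : cgr n (a - 1) i%:Z = (res a == res i.+1%:Z).
Proof. by rewrite cgrE -(res_shift _ _ 1) subrK -addn1 PoszD. Qed.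

Lemma prodop_cons X l i (x : vec r) : prodop r X (i :: l) x = X i (prodop r X l x).
Proof. by []. Qed.

Lemma prod_one (P : pred 'I_r) (g : 'I_r -> int) a :
  (forall k, P k -> k != a -> g k = 0) ->
  \prod_(k | P k) vv ^ (g k) = if P a then vv ^ (g a) else 1.
Proof.
move=> H. case: ifP => Pa.
- rewrite (bigD1 a) //= big1 ?mulr1 // => k /andP[Pk ka]. by rewrite H // expr0z.
- apply: big1 => k Pk. have ka : k != a by apply: contraFneq Pa => <-.
  by rewrite H // expr0z.
Qed.

Lemma E_one i x (s : idx r) p : res (s p) = res i%:Z ->
  (forall k, k != p -> res (s k) != res i%:Z) ->
  Eop n r i x s = (\prod_(k < r | (p < k)%N) vv ^ (kexp n i (s k))) * x (upd r s p 1).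
Proof.
move=> e H. rewrite /Eop (bigD1 p) //= cgrE e eqxx [X in _ + X]big1 ?addr0 // => k kp.
by rewrite cgrE ifF //; apply/negbTE; exact: H k kp.
Qed.

Lemma F_one i x (s : idx r) p : res (s p) = res i.+1%:Z ->
  (forall k, k != p -> res (s k) != res i.+1%:Z) ->
  Fop n r i x s = (\prod_(k < r | (k < p)%N) vv ^ (- kexp n i (s k))) * x (upd r s p (-1)).
Proof.
move=> e H. rewrite /Fop (bigD1 p) //= cgrm1 e eqxx [X in _ + X]big1 ?addr0 // => k kp.
by rewrite cgrm1 ifF //; apply/negbTE; exact: H k kp.
Qed.

Lemma kexpE i t : kexp n i t = (res t == res i%:Z)%:Z - (res t == res i.+1%:Z)%:Z.
Proof. by []. Qed.

Lemma om_pos (s : idx r) c : om s -> 1 <= c <= r%:Z -> exists p, res (s p) = c /\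
  forall k, k != p -> res (s k) != c.
Proof.
move=> /omP [Ra Rb Rc] hc. have [p ep] := Rc c hc. exists p; split => // k kp.
apply: contra kp => /eqP e'; apply/eqP; apply: Rb; by rewrite e' ep.
Qed.

Lemma E_tr i x s d c0 : om s -> 1 <= c0 <= r%:Z -> res (c0 + d c0) = res i%:Z ->
  (forall c, 1 <= c <= r%:Z -> c != c0 ->
     res (c + d c) != res i%:Z /\ res (c + d c) != res i.+1%:Z) ->
  Eop n r i x (tr d s) = x (tr (fun c => d c + (c == c0)%:Z) s).
Proof.
move=> Hs hc0 e H. have [p [ep Hk]] := @om_pos s c0 Hs hc0.
have /omP [Ra _ _] := Hs.
rewrite (@E_one _ _ _ p).
- rewrite (@prod_one _ _ p) ?ltnn ?mul1r.
  + congr x; apply/ffunP => k; rewrite !ffunE; case: eqP => [->|/eqP kp].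
    * by rewrite ep eqxx addrA.
    * by rewrite (negbTE (Hk k kp)) addr0.
  + move=> k _ kp. have [h1 h2] := H _ (Ra k) (Hk k kp).
    by rewrite kexpE res_tr (negbTE h1) (negbTE h2).
- by rewrite res_tr ep.
- move=> k kp; rewrite res_tr; exact: (H _ (Ra k) (Hk k kp)).1.
Qed.

Lemma F_tr i x s d c0 : om s -> 1 <= c0 <= r%:Z -> res (c0 + d c0) = res i.+1%:Z ->
  (forall c, 1 <= c <= r%:Z -> c != c0 ->
     res (c + d c) != res i%:Z /\ res (c + d c) != res i.+1%:Z) ->
  Fop n r i x (tr d s) = x (tr (fun c => d c - (c == c0)%:Z) s).
Proof.
move=> Hs hc0 e H. have [p [ep Hk]] := @om_pos s c0 Hs hc0.
have /omP [Ra _ _] := Hs.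
rewrite (@F_one _ _ _ p).
- rewrite (@prod_one _ _ p) ?ltnn ?mul1r.
  + congr x; apply/ffunP => k; rewrite !ffunE; case: eqP => [->|/eqP kp].
    * by rewrite ep eqxx addrA.
    * by rewrite (negbTE (Hk k kp)) subr0.
  + move=> k _ kp. have [h1 h2] := H _ (Ra k) (Hk k kp).
    by rewrite kexpE res_tr (negbTE h1) (negbTE h2) subrr oppr0.
- by rewrite res_tr ep.
- move=> k kp; rewrite res_tr; exact: (H _ (Ra k) (Hk k kp)).2.
Qed.

Ltac crunchz := repeat split_if; rewrite /=; lia.

Lemma prodop_cat X l1 l2 (x : vec r) :
  prodop r X (l1 ++ l2) x = prodop r X l1 (prodop r X l2 x).
Proof. by rewrite /prodop foldr_cat. Qed.

Lemma rev_iotaS m : rev (iota 1 m.+1) = m.+1 :: rev (iota 1 m).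
Proof. have := iotaD 1 m 1; rewrite addn1 => ->. by rewrite rev_cat /= add1n. Qed.

Definition dR (c : int) : int := if c == r%:Z then n%:Z - r%:Z + 1 else 1.
Definition dL (c : int) : int := if c == 1 then - (n%:Z - r%:Z + 1) else -1.

Lemma Eseg1 (s : idx r) (Z : vec r) : om s -> forall m (c : nat), (r <= c)%N -> (c + m <= n)%N ->
  prodop r (Eop n r) (iota c m) Z (tr (fun x => if x == r%:Z then c%:Z - r%:Z else 0) s) =
  Z (tr (fun x => if x == r%:Z then (c + m)%:Z - r%:Z else 0) s).
Proof.
move=> Hs; elim=> [|m IH] c h1 h2; first by rewrite addn0.
rewrite [iota c m.+1]/= prodop_cons (@E_tr c _ s _ r%:Z Hs);
  [ | lia | crunch | move=> x hx hne; crunch ].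
rewrite (@tr_ext _ (fun x => if x == r%:Z then c.+1%:Z - r%:Z else 0) s Hs);
  last by move=> x hx; crunchz.
rewrite IH; [by rewrite addSnnS | lia | lia].
Qed.

Lemma Eseg2 (s : idx r) (Z : vec r) : om s -> forall m, (m <= r.-1)%N ->
  prodop r (Eop n r) (rev (iota 1 m)) Z
    (tr (fun x => if x == r%:Z then n%:Z - r%:Z else if m%:Z < x then 1 else 0) s) =
  Z (tr (fun x => if x == r%:Z then n%:Z - r%:Z else 1) s).
Proof.
move=> Hs; elim=> [|m IH] hm.
- rewrite /= (@tr_ext _ (fun x => if x == r%:Z then n%:Z - r%:Z else 1) s Hs) // => x hx.
  crunchz.
- rewrite rev_iotaS prodop_cons (@E_tr m.+1 _ s _ m.+1%:Z Hs);
    [ | lia | crunch | move=> x hx hne; crunch].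
  rewrite (@tr_ext _ (fun x => if x == r%:Z then n%:Z - r%:Z else if m%:Z < x then 1 else 0) s Hs);
    last by move=> x hx; crunchz.
  apply: IH; lia.
Qed.

Lemma Eseg3 (s : idx r) (x : vec r) : om s ->
  Eop n r n x (tr (fun c => if c == r%:Z then n%:Z - r%:Z else 1) s) = x (tr dR s).
Proof.
move=> Hs. rewrite (@E_tr n _ s _ r%:Z Hs); [|lia|crunch|move=> c hc hne; crunch].
congr x; apply: tr_ext => // c hc; rewrite /dR; crunchz.
Qed.

Lemma TrhoE (s : idx r) x : om s -> Trho n r x s = x (tr dR s).
Proof.
move=> Hs. rewrite /Trho prodop_cat prodop_cat.
have E0 : s = tr (fun c => if c == r%:Z then r%:Z - r%:Z else 0) s.
  by rewrite -{1}(tr0 s); apply: tr_ext => // c hc; crunchz.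
rewrite {1}E0 Eseg1 //; last by lia.
rewrite (@tr_ext _ (fun c => if c == r%:Z then n%:Z - r%:Z else if r.-1%:Z < c then 1 else 0) s Hs);
  last by move=> c hc; crunchz.
by rewrite Eseg2 // prodop_cons Eseg3.
Qed.

Lemma Fseg1 (s : idx r) (Z : vec r) : om s -> forall m a, (a + m <= n - r)%N ->
  prodop r (Fop n r) [seq (n - k)%N | k <- iota a m] Z (tr (fun x => if x == 1 then - a%:Z else 0) s) =
  Z (tr (fun x => if x == 1 then - (a + m)%:Z else 0) s).
Proof.
move=> Hs; elim=> [|m IH] a h; first by rewrite addn0.
have -> : [seq (n - k)%N | k <- iota a m.+1] = (n - a)%N :: [seq (n - k)%N | k <- iota a.+1 m] by [].
rewrite prodop_cons (@F_tr (n - a) _ s _ 1 Hs); [|lia|crunch|move=> c hc hne; crunch].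
rewrite (@tr_ext _ (fun x => if x == 1 then - a.+1%:Z else 0) s Hs); last by move=> c hc; crunchz.
rewrite IH; [by rewrite addSnnS | lia].
Qed.

Lemma Fseg2 (s : idx r) (Y : vec r) : om s -> forall m (c : nat), (1 <= c)%N -> (c + m <= r)%N ->
  prodop r (Fop n r) (iota c m) Y
    (tr (fun x => if x == 1 then - (n%:Z - r%:Z) else if x <= c%:Z then -1 else 0) s) =
  Y (tr (fun x => if x == 1 then - (n%:Z - r%:Z) else if x <= (c + m)%:Z then -1 else 0) s).
Proof.
move=> Hs; elim=> [|m IH] c h1 h2; first by rewrite addn0.
rewrite [iota c m.+1]/= prodop_cons (@F_tr c _ s _ c.+1%:Z Hs);
  [ | lia | crunch | move=> x hx hne; crunch ].
rewrite (@tr_ext _ (fun x => if x == 1 then - (n%:Z - r%:Z) else if x <= c.+1%:Z then -1 else 0) s Hs);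
  last by move=> x hx; crunchz.
rewrite IH; [by rewrite addSnnS | lia | lia].
Qed.

Lemma Fseg3 (s : idx r) (x : vec r) : om s ->
  Fop n r r x (tr (fun c => if c == 1 then - (n%:Z - r%:Z) else if c <= r%:Z then -1 else 0) s)
  = x (tr dL s).
Proof.
move=> Hs. rewrite (@F_tr r _ s _ 1 Hs); [|lia|crunch|move=> c hc hne; crunch].
congr x; apply: tr_ext => // c hc; rewrite /dL; crunchz.
Qed.

Lemma TrhoinvE (s : idx r) x : om s -> Trhoinv n r x s = x (tr dL s).
Proof.
move=> Hs. rewrite /Trhoinv prodop_cat.
have E0 : s = tr (fun c => if c == 1 then - 0%N%:Z else 0) s.
  by rewrite -{1}(tr0 s); apply: tr_ext => // c hc; crunchz.
rewrite {1}E0 Fseg1 //.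
have -> : iota 1 r = iota 1 r.-1 ++ [:: r].
  have := iotaD 1 r.-1 1; rewrite addn1 prednK; last by lia.
  by move=> ->; rewrite /= add1n prednK //; lia.
rewrite prodop_cat.
rewrite (@tr_ext _ (fun x => if x == 1 then - (n%:Z - r%:Z) else if x <= 1%N%:Z then -1 else 0) s Hs);
  last by move=> c hc; crunchz.
rewrite Fseg2 //; last by lia.
rewrite prodop_cons.
rewrite (@tr_ext _ (fun c => if c == 1 then - (n%:Z - r%:Z) else if c <= r%:Z then -1 else 0) s Hs);
  last by move=> c hc; crunchz.
by rewrite Fseg3.
Qed.

Lemma vv_neq0 : vv != 0.
Proof. by rewrite /vv tofrac_eq0 polyX_eq0. Qed.

Definition dS (i : nat) (c : int) : int := (c == i%:Z)%:Z - (c == i.+1%:Z)%:Z.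
Definition sg i (s : idx r) := tr (dS i) s.
Definition qq : Qv := vv ^+ 2.
Definition cc i (s : idx r) : Qv :=
  if [exists a, exists b, (res (s a) == i%:Z) && (res (s b) == i.+1%:Z) && (b < a)%N]
  then qq - 1 else 0.

Lemma ccE i (s : idx r) a b : om s -> res (s a) = i%:Z -> res (s b) = i.+1%:Z ->
  cc i s = if (b < a)%N then qq - 1 else 0.
Proof.
move=> /omP [Ra Rb Rc] ea eb. rewrite /cc.
case: existsP => [[a' /existsP [b' /andP[/andP[/eqP ha /eqP hb] hlt]]] | N].
- have <- : a' = a by apply: Rb; rewrite ha ea.
  have <- : b' = b by apply: Rb; rewrite hb eb.
  by rewrite hlt.
- case: ifP => // hlt. exfalso; apply: N; exists a; apply/existsP; exists b.
  by rewrite ea eb !eqxx hlt.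
Qed.

Lemma TsE i x (s : idx r) : (1 <= i < r)%N -> om s ->
  Ts n r i x s = vv * x (sg i s) + cc i s * x s.
Proof.
move=> hi Hs. have /omP [Ra Rb Rc] := Hs.
have [a [ea Ha]] := @om_pos s i%:Z Hs ltac:(lia).
have [b [eb Hb]] := @om_pos s i.+1%:Z Hs ltac:(lia).
have ab : a != b by apply/eqP => e; subst; lia.
have ri : res i%:Z = i%:Z by rewrite res_id //; lia.
have ri1 : res i.+1%:Z = i.+1%:Z by rewrite res_id //; lia.
rewrite /Ts (@F_one _ _ _ b);
  [ | by rewrite eb ri1 | by move=> k kb; rewrite ri1; exact: Hb ].
set u := upd r s b (-1).
have ua : u a = s a by rewrite /u ffunE (negbTE ab).
have ub : res (u b) = res i%:Z.
  by rewrite /u ffunE eqxx -resD eb -addn1 PoszD addrK.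
have uk : forall k, k != a -> k != b -> u k = s k.
  by move=> k ka kb; rewrite /u ffunE (negbTE kb).
have kE : forall k, k != a -> k != b -> kexp n i (s k) = 0.
  move=> k ka kb; rewrite kexpE ri ri1 (negbTE (Ha k ka)) (negbTE (Hb k kb)). done.
rewrite /Eop [X in _ * (_ * X)](bigD1 a) //= [X in _ * (_ * (_ + X))](bigD1 b) /=;
  last by rewrite eq_sym ab.
rewrite [X in _ * (_ * (_ + (_ + X)))]big1; last first.
  move=> k /andP [ka kb]. rewrite cgrE uk // ri ifF //; apply/negbTE; exact: Ha.
rewrite !cgrE ua ea ub ri eqxx addr0.
have iE : (res i%:Z == res i.+1%:Z) = false by rewrite ri ri1; apply/eqP; lia.
rewrite (@prod_one _ _ a); last first.
  move=> k kb ka. rewrite kE ?oppr0 //. by apply: contraTneq kb => ->; rewrite ltnn.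
rewrite (@prod_one _ _ b); last first.
  move=> k ak kb. rewrite kexpE uk //; last by apply: contraTneq ak => ->; rewrite ltnn.
  by rewrite ri ri1 (negbTE (Ha k _)) ?(negbTE (Hb k _)) //; apply: contraTneq ak => ->; rewrite ltnn.
rewrite (@prod_one _ _ a); last first.
  move=> k bk ka. rewrite kexpE uk //; last by apply: contraTneq bk => ->; rewrite ltnn.
  by rewrite ri ri1 (negbTE (Ha k _)) ?(negbTE (Hb k _)) //; apply: contraTneq bk => ->; rewrite ltnn.
rewrite (@ccE i s a b Hs ea eb) !kexpE ua ea ub iE eqxx ri /=.
have -> : upd r u a 1 = sg i s.
  apply/ffunP => k; rewrite /sg /tr /dS /u !ffunE.
  case: (k =P a) => [->|/eqP ka].
  - rewrite (negbTE ab) ea. lia.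
  - case: (k =P b) => [->|/eqP kb].
    + rewrite eb. lia.
    + rewrite (negbTE (Ha k ka)) (negbTE (Hb k kb)) /=; lia.
have -> : upd r u b 1 = s.
  apply/ffunP => k; rewrite /u !ffunE.
  case: (k =P b) => [->|/eqP kb]; first by rewrite subrK.
  by [].
rewrite /qq. have v0 := vv_neq0.
have e0 : (i%:Z == res i.+1%:Z) = false by rewrite ri1; apply/eqP; lia.
rewrite eqxx e0 /=.
have e1 : (1%:Z - 0%:Z : int) = 1 by [].
rewrite ?e1 ?expr1z ?exprN1.
case: (ltngtP a b) => hab.
- exact: alg1.
- exact: alg2.
- by move: ab; rewrite (val_inj hab) eqxx.
Qed.

Ltac nores x := lazymatch x with context [res _] => fail | _ => idtac end.
Ltac res_ev := match goal with |- context [res ?x] => nores x;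
  first [ rewrite (res_id x); last by lia
        | rewrite (res_sub x); last by lia
        | rewrite (res_add x); last by lia ] end.
Ltac notc b := lazymatch b with true => fail | false => fail | _ => idtac end.
Ltac dec_b := match goal with
  | |- context [if ?b then _ else _] => nores b; notc b;
      first [ rewrite (_ : b = true); last by lia
            | rewrite (_ : b = false); last by lia ]
  | |- context [?a == ?b] => nores a; nores b; notc (a == b);
      first [ rewrite (_ : (a == b) = true); last by apply/eqP; lia
            | rewrite (_ : (a == b) = false); last by apply/eqP; lia ] end.
Ltac split_b := match goal with
  | |- context [if ?b then _ else _] => nores b; notc b; let h := fresh "hb" in case: (boolP b) => h
  | |- context [?a == ?b] => nores a; nores b; let h := fresh "hb" in case: (boolP (a == b)) => h
  end.
Ltac tsimp := repeat (first [dec_b | res_ev | split_b]); rewrite /=; try lia.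

Lemma sgK i s : (1 <= i < r)%N -> om s -> sg i (sg i s) = s.
Proof.
move=> hi Hs. rewrite /sg tr_comp -{2}(tr0 s). apply: tr_ext => // c hc. rewrite /dS. tsimp.
Qed.

Lemma sg_comm i j s : (1 <= i < r)%N -> (1 <= j < r)%N -> (i.+1 < j)%N || (j.+1 < i)%N ->
  om s -> sg i (sg j s) = sg j (sg i s).
Proof.
move=> hi hj /orP hij Hs. rewrite /sg !tr_comp. apply: tr_ext => // c hc. rewrite /dS.
case: hij => hij; tsimp.
Qed.

Lemma sg_braid i s : (1 <= i)%N -> (i.+1 < r)%N -> om s ->
  sg i (sg i.+1 (sg i s)) = sg i.+1 (sg i (sg i.+1 s)).
Proof.
move=> h1 h2 Hs. rewrite /sg !tr_comp. apply: tr_ext => // c hc. rewrite /dS. tsimp.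
Qed.

Lemma om_sg i s : (1 <= i < r)%N -> om s -> om (sg i s).
Proof.
move=> hi Hs. apply: om_tr => //.
- move=> c hc; rewrite /dS; tsimp.
- move=> c c' hc hc'; rewrite /dS; tsimp.
- move=> c hc; exists (c + dS i c); rewrite /dS; tsimp.
Qed.

Lemma om_trR s : om s -> om (tr dR s).
Proof.
move=> Hs. apply: om_tr => //.
- move=> c hc; rewrite /dR; tsimp.
- move=> c c' hc hc'; rewrite /dR; tsimp.
- move=> c hc; exists (res (c + dL c)); rewrite /dR /dL; tsimp.
Qed.

Lemma om_trL s : om s -> om (tr dL s).
Proof.
move=> Hs. apply: om_tr => //.
- move=> c hc; rewrite /dL; tsimp.
- move=> c c' hc hc'; rewrite /dL; tsimp.
- move=> c hc; exists (res (c + dR c)); rewrite /dR /dL; tsimp.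
Qed.

Lemma trLR s : om s -> tr dL (tr dR s) = s.
Proof.
move=> Hs. rewrite tr_comp -{2}(tr0 s). apply: tr_ext => // c hc. rewrite /dR /dL. tsimp.
Qed.

Lemma trRL s : om s -> tr dR (tr dL s) = s.
Proof.
move=> Hs. rewrite tr_comp -{2}(tr0 s). apply: tr_ext => // c hc. rewrite /dR /dL. tsimp.
Qed.

Lemma trLsR i s : (1 <= i)%N -> (i.+1 < r)%N -> om s -> tr dL (sg i.+1 (tr dR s)) = sg i s.
Proof.
move=> h1 h2 Hs. rewrite /sg !tr_comp. apply: tr_ext => // c hc. rewrite /dR /dL /dS. tsimp.
Qed.

Lemma ccR i s : (1 <= i)%N -> (i.+1 < r)%N -> om s -> cc i.+1 (tr dR s) = cc i s.
Proof.
move=> h1 h2 Hs.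
have [a [ea _]] := @om_pos s i%:Z Hs ltac:(lia).
have [b [eb _]] := @om_pos s i.+1%:Z Hs ltac:(lia).
rewrite (@ccE i s a b Hs ea eb) (@ccE i.+1 (tr dR s) a b (om_trR s Hs)) //.
- by rewrite res_tr ea /dR; tsimp.
- by rewrite res_tr eb /dR; tsimp.
Qed.

Definition dN (c : int) : int := n%:Z.

Lemma ccN i s : (1 <= i < r)%N -> om s -> om (tr dN s) -> cc i (tr dN s) = cc i s.
Proof.
move=> h1 Hs Hs'.
have [a [ea _]] := @om_pos s i%:Z Hs ltac:(lia).
have [b [eb _]] := @om_pos s i.+1%:Z Hs ltac:(lia).
rewrite (@ccE i s a b Hs ea eb) (@ccE i (tr dN s) a b Hs') //.
- by rewrite res_tr ea /dN; tsimp.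
- by rewrite res_tr eb /dN; tsimp.
Qed.

Lemma iterL k s : (k <= r)%N -> om s ->
  iter k (tr dL) s = tr (fun c => if k%:Z < c then - k%:Z else - k%:Z - (n%:Z - r%:Z)) s.
Proof.
move=> hk Hs; elim: k hk => [|k IH] hk.
- rewrite /= -{1}(tr0 s); apply: tr_ext => // c hc; tsimp.
- rewrite iterS IH; last by lia.
  rewrite tr_comp; apply: tr_ext => // c hc; rewrite /dL; tsimp.
Qed.

Lemma om_iter f k s : (forall t, om t -> om (f t)) -> om s -> om (iter k f s).
Proof. move=> H Hs; elim: k => [|k IH] //=. exact: H. Qed.

Lemma iterLR k s : om s -> iter k (tr dL) (iter k (tr dR) s) = s.
Proof.
elim: k s => [|k IH] s Hs; first by [].
rewrite iterSr iterS trLR ?IH //. exact: om_iter om_trR Hs.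
Qed.

Lemma iterRn s : om s -> iter r (tr dR) s = tr dN s.
Proof.
move=> Hs. have Ht : om (iter r (tr dR) s) by exact: om_iter om_trR Hs.
have E := @iterLR r s Hs. rewrite iterL // in E.
rewrite -{2}E tr_comp -{1}(tr0 (iter r (tr dR) s)). apply: tr_ext => // c hc; rewrite /dN; tsimp.
Qed.

Lemma iterTrho k y s : om s -> iter k (Trho n r) y s = y (iter k (tr dR) s).
Proof.
elim: k s => [|k IH] s Hs; first by [].
by rewrite iterS TrhoE // (IH _ (om_trR _ Hs)) -iterSr.
Qed.

Lemma iterTrhoinv k y s : om s -> iter k (Trhoinv n r) y s = y (iter k (tr dL) s).
Proof.
elim: k s => [|k IH] s Hs; first by [].
by rewrite iterS TrhoinvE // (IH _ (om_trL _ Hs)) -iterSr.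
Qed.

Lemma Om_zero y t : Om y -> ~~ om t -> y t = 0.
Proof. move=> H nt; apply/eqP; apply: contraNT nt; exact: H. Qed.

Lemma Om_iter f k x : (forall y, Om y -> Om (f y)) -> Om x -> Om (iter k f x).
Proof. move=> H Hx; elim: k => [|k IH]; [exact: Hx | exact: (H _ IH)]. Qed.

Arguments Om_Trho {x}. Arguments Om_Trhoinv {x}. Arguments Om_Ts {i x}.
Arguments Om_zero {y t}. Arguments om_trR {s}. Arguments om_trL {s}.
Arguments om_sg {i s}. Arguments TsE {i x s}. Arguments TrhoE {s x}.
Arguments TrhoinvE {s x}. Arguments sgK {i s}.

Ltac genx x := repeat match goal with |- context [x ?t] =>
  let X := fresh "X" in generalize (x t) => X end.

Lemma inV_Trho x : inVomega n r x -> inVomega n r (Trho n r x).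
Proof.
case=> [[supp Hsupp] HO]. split; last exact: Om_Trho HO.
exists (map (tr dL) supp) => t ht. have Ht : om t := Om_Trho HO t ht.
rewrite TrhoE // in ht. apply/mapP; exists (tr dR t); [exact: Hsupp | by rewrite trLR].
Qed.

Lemma inV_Trhoinv x : inVomega n r x -> inVomega n r (Trhoinv n r x).
Proof.
case=> [[supp Hsupp] HO]. split; last exact: Om_Trhoinv HO.
exists (map (tr dR) supp) => t ht. have Ht : om t := Om_Trhoinv HO t ht.
rewrite TrhoinvE // in ht. apply/mapP; exists (tr dL t); [exact: Hsupp | by rewrite trRL].
Qed.

Lemma inV_Ts i x : (1 <= i < r)%N -> inVomega n r x -> inVomega n r (Ts n r i x).
Proof.
move=> hi; case=> [[supp Hsupp] HO]. split; last exact: Om_Ts HO.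
exists (supp ++ map (sg i) supp) => t ht. have Ht : om t := Om_Ts HO t ht.
rewrite (TsE hi Ht) in ht. rewrite mem_cat. case: (eqVneq (x t) 0) => [x0 | xt].
- rewrite x0 mulr0 addr0 in ht.
  have : x (sg i t) != 0 by apply: contraNneq ht => ->; rewrite mulr0.
  move/Hsupp => hs. apply/orP; right; apply/mapP; exists (sg i t) => //; by rewrite sgK.
- by rewrite (Hsupp _ xt).
Qed.

Lemma inv1 x : Om x -> Trho n r (Trhoinv n r x) = x.
Proof.
move=> Hx; apply: functional_extensionality => t. case: (boolP (om t)) => Ht.
- by rewrite TrhoE // TrhoinvE ?om_trR // trLR.
- by rewrite (Om_zero (Om_Trho (Om_Trhoinv Hx)) Ht) (Om_zero Hx Ht).
Qed.

Lemma inv2 x : Om x -> Trhoinv n r (Trho n r x) = x.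
Proof.
move=> Hx; apply: functional_extensionality => t. case: (boolP (om t)) => Ht.
- by rewrite TrhoinvE // TrhoE ?om_trL // trRL.
- by rewrite (Om_zero (Om_Trhoinv (Om_Trho Hx)) Ht) (Om_zero Hx Ht).
Qed.

Lemma flip {a b : 'I_r} : a != b -> (b < a)%N = ~~ (a < b)%N.
Proof.
move=> ne. have ne' : (a : nat) != b by []. by rewrite ltnNge leq_eqVlt (negbTE ne').
Qed.

Ltac rpos H1 H2 H3 := rewrite /sg !res_tr ?H1 ?H2 ?H3; rewrite /dS; tsimp.

Lemma quad i x : (1 <= i < r)%N -> Om x ->
  Ts n r i (Ts n r i x) = (fun t => (qq - 1) * Ts n r i x t + qq * x t).
Proof.
move=> hi Hx; apply: functional_extensionality => t. case: (boolP (om t)) => Ht.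
- have H1 := om_sg hi Ht.
  rewrite (TsE hi Ht) (TsE hi H1) (TsE hi Ht) (sgK hi Ht).
  have [a [ea _]] := @om_pos t i%:Z Ht ltac:(lia).
  have [b [eb _]] := @om_pos t i.+1%:Z Ht ltac:(lia).
  have ab : a != b by apply/eqP => e; subst; lia.
  rewrite (@ccE i t a b Ht ea eb) (@ccE i (sg i t) b a H1); [|rpos ea eb eb|rpos ea eb eb].
  rewrite (flip ab). genx x. rewrite /qq. case: (a < b)%N; rewrite /=; ring.
- by rewrite (Om_zero (Om_Ts (Om_Ts Hx)) Ht) (Om_zero (Om_Ts Hx) Ht) (Om_zero Hx Ht) !mulr0 addr0.
Qed.

Lemma cc_far i j t : (1 <= i < r)%N -> (1 <= j < r)%N -> (i.+1 < j)%N || (j.+1 < i)%N ->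
  om t -> cc j (sg i t) = cc j t.
Proof.
move=> hi hj /orP hij Ht. have H1 := om_sg hi Ht.
have [a [ea _]] := @om_pos t j%:Z Ht ltac:(lia).
have [b [eb _]] := @om_pos t j.+1%:Z Ht ltac:(lia).
rewrite (@ccE j t a b Ht ea eb) (@ccE j (sg i t) a b H1) //.
- rewrite /sg !res_tr ea /dS. case: hij => hij; tsimp.
- rewrite /sg !res_tr eb /dS. case: hij => hij; tsimp.
Qed.

Lemma comm i j x : (1 <= i < r)%N -> (1 <= j < r)%N -> (i.+1 < j)%N || (j.+1 < i)%N ->
  Om x -> Ts n r i (Ts n r j x) = Ts n r j (Ts n r i x).
Proof.
move=> hi hj hij Hx; apply: functional_extensionality => t. case: (boolP (om t)) => Ht.
- have H1 := om_sg hi Ht. have H2 := om_sg hj Ht.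
  rewrite (TsE (x := Ts n r j x) hi Ht) (TsE (x := Ts n r i x) hj Ht).
  rewrite (TsE (x := x) hj H1) (TsE (x := x) hj Ht) (TsE (x := x) hi H2) (TsE (x := x) hi Ht).
  rewrite (@sg_comm j i t hj hi _ Ht); last by rewrite orbC.
  rewrite (@cc_far i j t hi hj hij Ht) (@cc_far j i t hj hi _ Ht); last by rewrite orbC.
  genx x. move: (cc i t) (cc j t) => C1 C2. ring.
- by rewrite (Om_zero (Om_Ts (Om_Ts Hx)) Ht) (Om_zero (Om_Ts (Om_Ts Hx)) Ht).
Qed.

Lemma braid1 i x : (1 <= i)%N -> (i.+1 < r)%N -> Om x ->
  Ts n r i (Ts n r i.+1 (Ts n r i x)) = Ts n r i.+1 (Ts n r i (Ts n r i.+1 x)).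
Proof.
move=> h1 h2 Hx; apply: functional_extensionality => t. case: (boolP (om t)) => Ht.
- have hi : (1 <= i < r)%N by lia. have hj : (1 <= i.+1 < r)%N by lia.
  have H1 := om_sg hi Ht. have H2 := om_sg hj Ht.
  have H21 := om_sg hj H1. have H12 := om_sg hi H2.
  rewrite (TsE (x := Ts n r i.+1 (Ts n r i x)) hi Ht) (TsE (x := Ts n r i (Ts n r i.+1 x)) hj Ht).
  rewrite (TsE (x := Ts n r i x) hj H1) (TsE (x := Ts n r i x) hj Ht).
  rewrite (TsE (x := Ts n r i.+1 x) hi H2) (TsE (x := Ts n r i.+1 x) hi Ht).
  rewrite ?(TsE (x := x) hi H21) ?(TsE (x := x) hi H1) ?(TsE (x := x) hi H2) ?(TsE (x := x) hi Ht).
  rewrite ?(TsE (x := x) hj H12) ?(TsE (x := x) hj H2) ?(TsE (x := x) hj H1) ?(TsE (x := x) hj Ht).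
  rewrite (sgK hi Ht) (sgK hj Ht) (@sg_braid i t h1 h2 Ht).
  have [a [ea _]] := @om_pos t i%:Z Ht ltac:(lia).
  have [b [eb _]] := @om_pos t i.+1%:Z Ht ltac:(lia).
  have [c [ec _]] := @om_pos t i.+2%:Z Ht ltac:(lia).
  have ab : a != b by apply/eqP => e; subst; lia.
  have bc : b != c by apply/eqP => e; subst; lia.
  have ac : a != c by apply/eqP => e; subst; lia.
  have ab' : (a : nat) != b by []. have bc' : (b : nat) != c by []. have ac' : (a : nat) != c by [].
  have c1 : cc i t = if (b < a)%N then qq - 1 else 0 by apply: ccE.
  have c2 : cc i (sg i t) = if (a < b)%N then qq - 1 else 0.
    by apply: (@ccE i _ b a H1); clear -ea eb ec h1 h2 hr hn; rpos ea eb ec.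
  have c3 : cc i (sg i.+1 t) = if (c < a)%N then qq - 1 else 0.
    by apply: (@ccE i _ a c H2); clear -ea eb ec h1 h2 hr hn; rpos ea eb ec.
  have c4 : cc i (sg i.+1 (sg i t)) = if (c < b)%N then qq - 1 else 0.
    by apply: (@ccE i _ b c H21); clear -ea eb ec h1 h2 hr hn; rpos ea eb ec.
  have c5 : cc i.+1 t = if (c < b)%N then qq - 1 else 0 by apply: ccE.
  have c6 : cc i.+1 (sg i.+1 t) = if (b < c)%N then qq - 1 else 0.
    by apply: (@ccE i.+1 _ c b H2); clear -ea eb ec h1 h2 hr hn; rpos ea eb ec.
  have c7 : cc i.+1 (sg i t) = if (c < a)%N then qq - 1 else 0.
    by apply: (@ccE i.+1 _ a c H1); clear -ea eb ec h1 h2 hr hn; rpos ea eb ec.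
  have c8 : cc i.+1 (sg i (sg i.+1 t)) = if (b < a)%N then qq - 1 else 0.
    by apply: (@ccE i.+1 _ a b H12); clear -ea eb ec h1 h2 hr hn; rpos ea eb ec.
  rewrite ?c1 ?c2 ?c3 ?c4 ?c5 ?c6 ?c7 ?c8 (flip ab) (flip bc) (flip ac).
  have t1 : (a < b)%N -> (b < c)%N -> (a < c)%N by clear -ab' bc' ac'; move=> ? ?; lia.
  have t2 : ~~ (a < b)%N -> ~~ (b < c)%N -> ~~ (a < c)%N by clear -ab' bc' ac'; move=> ? ?; lia.
  genx x. rewrite /qq. move: t1 t2.
  case: (a < b)%N; case: (b < c)%N; case: (a < c)%N => /= T1 T2;
    first [ by case: (T1 isT isT) | by case: (T2 isT isT) | ring ].
- by rewrite (Om_zero (Om_Ts (Om_Ts (Om_Ts Hx))) Ht) (Om_zero (Om_Ts (Om_Ts (Om_Ts Hx))) Ht).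
Qed.

Lemma braid i j x : (1 <= i < r)%N -> (1 <= j < r)%N -> (i.+1 == j) || (j.+1 == i) -> Om x ->
  Ts n r i (Ts n r j (Ts n r i x)) = Ts n r j (Ts n r i (Ts n r j x)).
Proof.
move=> hi hj /orP [] /eqP e Hx.
- subst j. apply: braid1 => //; lia.
- subst i. symmetry. apply: braid1 => //; lia.
Qed.

Lemma conj4 i x : (1 <= i)%N -> (i < r.-1)%N -> Om x ->
  Trho n r (Ts n r i.+1 (Trhoinv n r x)) = Ts n r i x.
Proof.
move=> h1 h2 Hx; apply: functional_extensionality => t. case: (boolP (om t)) => Ht.
- have hi : (1 <= i < r)%N by lia. have hj : (1 <= i.+1 < r)%N by lia.
  have h2' : (i.+1 < r)%N by lia.
  have HR := om_trR Ht. have HS := om_sg hj HR.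
  rewrite TrhoE // (TsE hj HR) (TrhoinvE HS) (TrhoinvE HR) (TsE hi Ht).
  by rewrite (@trLsR i t h1 h2' Ht) (@trLR t Ht) (@ccR i t h1 h2' Ht).
- by rewrite (Om_zero (Om_Trho (Om_Ts (Om_Trhoinv Hx))) Ht) (Om_zero (Om_Ts Hx) Ht).
Qed.

Lemma iterLn u : om u -> iter r (tr dL) u = tr (fun _ => - n%:Z) u.
Proof.
move=> Hu. rewrite iterL //. apply: tr_ext => // c hc. clear -hc hr hn. tsimp.
Qed.

Lemma conj5 i x : (1 <= i < r)%N -> Om x ->
  iter r (Trho n r) (Ts n r i (iter r (Trhoinv n r) x)) = Ts n r i x.
Proof.
move=> hi Hx; apply: functional_extensionality => t. case: (boolP (om t)) => Ht.
- have HN : om (tr dN t) by rewrite -iterRn //; exact: om_iter (@om_trR) Ht.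
  have HSN := om_sg hi HN.
  rewrite iterTrho // iterRn // (TsE hi HN) !iterTrhoinv // !iterLn // (TsE hi Ht).
  rewrite (@ccN i t hi Ht HN).
  have -> : tr (fun _ => - n%:Z) (tr dN t) = t.
    rewrite tr_comp -{2}(tr0 t); apply: tr_ext => // c hc; rewrite /dN; clear -hc hr hn; tsimp.
  have -> : tr (fun _ => - n%:Z) (sg i (tr dN t)) = sg i t.
    rewrite /sg !tr_comp; apply: tr_ext => // c hc; rewrite /dN /dS; clear -hc hi hr hn; tsimp.
  done.
- have O1 : Om (iter r (Trhoinv n r) x) :=
    @Om_iter (Trhoinv n r) r x (fun y hy => Om_Trhoinv hy) Hx.
  have O2 : Om (Ts n r i (iter r (Trhoinv n r) x)) := Om_Ts O1.
  have O3 : Om (iter r (Trho n r) (Ts n r i (iter r (Trhoinv n r) x))) :=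
    @Om_iter (Trho n r) r _ (fun y hy => Om_Trho hy) O2.
  by rewrite (Om_zero O3 Ht) (Om_zero (Om_Ts Hx) Ht).
Qed.

Lemma main :
  let q : Qv := vv ^+ 2 in
  (forall x, inVomega n r x ->
     inVomega n r (Trho n r x) /\ inVomega n r (Trhoinv n r x) /\
     (forall i, (1 <= i < r)%N -> inVomega n r (Ts n r i x))) /\
  (forall x, inVomega n r x ->
     Trho n r (Trhoinv n r x) = x /\ Trhoinv n r (Trho n r x) = x) /\
  (forall i x, (1 <= i < r)%N -> inVomega n r x ->
     Ts n r i (Ts n r i x) = (fun t => (q - 1) * Ts n r i x t + q * x t)) /\
  (forall i j x, (1 <= i < r)%N -> (1 <= j < r)%N ->
     (i.+1 < j)%N || (j.+1 < i)%N -> inVomega n r x ->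
     Ts n r i (Ts n r j x) = Ts n r j (Ts n r i x)) /\
  (forall i j x, (1 <= i < r)%N -> (1 <= j < r)%N ->
     (i.+1 == j) || (j.+1 == i) -> inVomega n r x ->
     Ts n r i (Ts n r j (Ts n r i x)) = Ts n r j (Ts n r i (Ts n r j x))) /\
  (forall i x, (1 <= i)%N -> (i < r.-1)%N -> inVomega n r x ->
     Trho n r (Ts n r i.+1 (Trhoinv n r x)) = Ts n r i x) /\
  (forall i x, (1 <= i < r)%N -> inVomega n r x ->
     iter r (Trho n r) (Ts n r i (iter r (Trhoinv n r) x)) = Ts n r i x).
Proof.
move=> q.
split; [|split; [|split; [|split; [|split; [|split]]]]].
- move=> x hx. split; [exact: inV_Trho | split; [exact: inV_Trhoinv | move=> i hi; exact: inV_Ts]].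
- move=> x [_ Hx]. split; [exact: inv1 | exact: inv2].
- move=> i x hi [_ Hx]. exact: quad.
- move=> i j x hi hj hij [_ Hx]. exact: comm.
- move=> i j x hi hj hij [_ Hx]. exact: braid.
- move=> i x h1 h2 [_ Hx]. exact: conj4.
- move=> i x hi [_ Hx]. exact: conj5.
Qed.
End Main.

Theorem proposition2p1p7 (r n : nat) (hr : (3 <= r)%N) (hn : (r < n)%N) :
  let q : Qv := vv ^+ 2 in
  (forall x, inVomega n r x ->
     inVomega n r (Trho n r x) /\ inVomega n r (Trhoinv n r x) /\
     (forall i, (1 <= i < r)%N -> inVomega n r (Ts n r i x))) /\
  (forall x, inVomega n r x ->
     Trho n r (Trhoinv n r x) = x /\ Trhoinv n r (Trho n r x) = x) /\
  (forall i x, (1 <= i < r)%N -> inVomega n r x ->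
     Ts n r i (Ts n r i x) = (fun t => (q - 1) * Ts n r i x t + q * x t)) /\
  (forall i j x, (1 <= i < r)%N -> (1 <= j < r)%N ->
     (i.+1 < j)%N || (j.+1 < i)%N -> inVomega n r x ->
     Ts n r i (Ts n r j x) = Ts n r j (Ts n r i x)) /\
  (forall i j x, (1 <= i < r)%N -> (1 <= j < r)%N ->
     (i.+1 == j) || (j.+1 == i) -> inVomega n r x ->
     Ts n r i (Ts n r j (Ts n r i x)) = Ts n r j (Ts n r i (Ts n r j x))) /\
  (forall i x, (1 <= i)%N -> (i < r.-1)%N -> inVomega n r x ->
     Trho n r (Ts n r i.+1 (Trhoinv n r x)) = Ts n r i x) /\
  (forall i x, (1 <= i < r)%N -> inVomega n r x ->
     iter r (Trho n r) (Ts n r i (iter r (Trhoinv n r) x)) = Ts n r i x).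
Proof. exact: main. Qed.
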